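(* For all teams $T,S$ the following are equivalent: (1) $T\equiv_{\mathrm{st}}S$; (2) there are surjective, non-decreasing functions $\mu,\nu:\mathbb N\to\mathbb N$ such that $T^{\mu(n)}\equiv_{\mathrm{st}}S^{\nu(n)}$ for all $n\ge0$.
   Context: A trace is an infinite sequence $t=t(0)t(1)\cdots$ of subsets of a set $\mathrm{AP}$ of propositions; $t^i:=t(i)t(i+1)\cdots$. A team is a set of traces; $T^i:=\{t^i:t\in T\}$. A stuttering function of a trace $t$ is a strictly increasing function $f:\mathbb N\to\mathbb N$ with $f(0)=0$ such that $t(f(k))=t(f(k)+1)=\cdots=t(f(k+1)-1)$ for all $k\ge0$. A stuttering function of a team $T$ is a function that is a stuttering function of every $t\in T$. For $f:\mathbb N\to\mathbb N$, $t[f]:=t(f(0))t(f(1))t(f(2))\cdots$ and $T[f]:=\{t[f]:t\in T\}$. Teams $T,T'$ are stutter-equivalent ($T\equiv_{\mathrm{st}}T'$) if there are a stuttering function $f$ of $T$ and a stuttering function $f'$ of $T'$ with $T[f]=T'[f']$. *)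

(* Defs.v *)
From Stdlib Require Import Arith.

Definition trace (AP : Type) := nat -> (AP -> Prop).
Definition team (AP : Type) := trace AP -> Prop.

Definition trace_suffix {AP : Type} (t : trace AP) (i : nat) : trace AP :=
  fun n => t (i + n).
Definition team_suffix {AP : Type} (T : team AP) (i : nat) : team AP :=
  fun u => exists t, T t /\ u = trace_suffix t i.

Definition stuttering_fun {AP : Type} (t : trace AP) (f : nat -> nat) : Prop :=
  f 0 = 0 /\
  (forall m n, m < n -> f m < f n) /\
  (forall k j, f k <= j < f (S k) -> t j = t (f k)).

Definition team_stuttering_fun {AP : Type} (T : team AP) (f : nat -> nat) : Prop :=
  forall t, T t -> stuttering_fun t f.

Definition trace_comp {AP : Type} (t : trace AP) (f : nat -> nat) : trace AP :=
  fun n => t (f n).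
Definition team_comp {AP : Type} (T : team AP) (f : nat -> nat) : team AP :=
  fun u => exists t, T t /\ u = trace_comp t f.

Definition stutter_equiv {AP : Type} (T T' : team AP) : Prop :=
  exists f f', team_stuttering_fun T f /\ team_stuttering_fun T' f' /\
    team_comp T f = team_comp T' f'.

Definition surjective_nat (mu : nat -> nat) : Prop := forall m, exists n, mu n = m.
Definition nondecreasing_nat (mu : nat -> nat) : Prop := forall m n, m <= n -> mu m <= mu n.

(* Main.v *)
Require Import Defs.
From Stdlib Require Import Arith Lia FunctionalExtensionality PropExtensionality Classical.

Lemma team_ext {AP : Type} (A B : team AP) : (forall u, A u <-> B u) -> A = B.
Proof. intro H. apply functional_extensionality; intro u. apply propositional_extensionality. apply H. Qed.

Lemma strict_of_step (f : nat -> nat) : (forall m, f m < f (S m)) -> forall m n, m < n -> f m < f n.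
Proof. intros H m n Hmn. induction Hmn. apply H. specialize (H m0). lia. Qed.

Lemma mono_of_step (f : nat -> nat) : (forall m, f m <= f (S m)) -> forall m n, m <= n -> f m <= f n.
Proof. intros H m n Hmn. induction Hmn. lia. specialize (H m0). lia. Qed.

Lemma suffix_equiv {AP : Type} (T : team AP) (f : nat -> nat) (k a : nat) :
  team_stuttering_fun T f -> (forall m, f m < f (S m)) -> f k <= a < f (S k) ->
  exists g, team_stuttering_fun (team_suffix T a) g /\
    team_comp (team_suffix T a) g = team_suffix (team_comp T f) k.
Proof.
  intros HT Hfi Hka.
  pose proof (strict_of_step f Hfi) as Hst.
  exists (fun m => match m with 0 => 0 | S m => f (k + S m) - a end).
  assert (Htr : forall t, T t ->
    trace_comp (trace_suffix t a) (fun m => match m with 0 => 0 | S m => f (k + S m) - a end)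
    = trace_suffix (trace_comp t f) k).
  { intros t Ht. destruct (HT t Ht) as [_ [_ Hs]].
    apply functional_extensionality; intro m. destruct m as [|m];
    unfold trace_comp, trace_suffix.
    - rewrite !Nat.add_0_r. rewrite (Hs k a) by lia. reflexivity.
    - assert (f (S k) <= f (k + S m)).
      { destruct (Nat.eq_dec (S k) (k + S m)) as [e|e]. rewrite e; lia.
        assert (S k < k + S m) by lia. specialize (Hst _ _ H). lia. }
      replace (a + (f (k + S m) - a)) with (f (k + S m)) by lia. reflexivity. }
  split.
  - intros u [t [Ht ->]]. destruct (HT t Ht) as [_ [_ Hs]].
    assert (Hg : forall m, (match m with 0 => 0 | S m => f (k + S m) - a end)
                   < (match S m with 0 => 0 | S m => f (k + S m) - a end)).
    { intros [|m].
      - replace (k + 1) with (S k) by lia. lia.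
      - pose proof (Hfi (k + S m)). replace (k + S (S m)) with (S (k + S m)) by lia.
        assert (S k <= k + S m) by lia.
        assert (f (S k) <= f (k + S m)).
        { destruct (Nat.eq_dec (S k) (k + S m)) as [e|e]. rewrite e; lia.
          assert (S k < k + S m) by lia. specialize (Hst _ _ H1). lia. }
        lia. }
    split; [reflexivity|split].
    + apply (strict_of_step _ Hg).
    + intros [|m] j Hj; unfold trace_suffix.
      * replace (k + 1) with (S k) in Hj by lia.
        rewrite (Hs k (a + j)) by lia. rewrite (Hs k (a + 0)) by lia. reflexivity.
      * assert (f (S k) <= f (k + S m)).
        { destruct (Nat.eq_dec (S k) (k + S m)) as [e|e]. rewrite e; lia.
          assert (S k < k + S m) by lia. specialize (Hst _ _ H). lia. }
        replace (k + S (S m)) with (S (k + S m)) in Hj by lia.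
        replace (a + (f (k + S m) - a)) with (f (k + S m)) by lia.
        apply Hs. lia.
  - apply team_ext; intro u; split.
    + intros [v [[t [Ht ->]] ->]]. exists (trace_comp t f). split.
      exists t; split; auto. apply Htr; auto.
    + intros [v [[t [Ht ->]] ->]]. exists (trace_suffix t a). split.
      exists t; split; auto. symmetry; apply Htr; auto.
Qed.

Fixpoint walk (f f' : nat -> nat) (n : nat) : nat * nat * nat :=
  match n with
  | 0 => (0, 0, 0)
  | S n => let '(k, a, b) := walk f f' n in
      if S a <? f (S k) then (k, S a, b)
      else if S b <? f' (S k) then (k, a, S b)
      else (S k, S a, S b)
  end.

Definition kk f f' n := fst (fst (walk f f' n)).
Definition mu f f' n := snd (fst (walk f f' n)).
Definition nu f f' n := snd (walk f f' n).

Section W.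
Variables f f' : nat -> nat.
Hypothesis Hf0 : f 0 = 0.
Hypothesis Hf'0 : f' 0 = 0.
Hypothesis Hfi : forall m, f m < f (S m).
Hypothesis Hf'i : forall m, f' m < f' (S m).

Lemma walk_inv n : f (kk f f' n) <= mu f f' n < f (S (kk f f' n)) /\
                   f' (kk f f' n) <= nu f f' n < f' (S (kk f f' n)).
Proof.
  unfold kk, mu, nu. induction n as [|n IH].
  - simpl. pose proof (Hfi 0). pose proof (Hf'i 0). lia.
  - cbn [walk]. destruct (walk f f' n) as [[k a] b]. simpl in IH |- *.
    destruct (Nat.ltb_spec (S a) (f (S k))); simpl.
    + lia.
    + destruct (Nat.ltb_spec (S b) (f' (S k))); simpl.
      * lia.
      * pose proof (Hfi (S k)). pose proof (Hf'i (S k)). lia.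
Qed.

Lemma mu_step n : mu f f' n <= mu f f' (S n) /\ mu f f' (S n) <= S (mu f f' n).
Proof.
  unfold mu. cbn [walk]. destruct (walk f f' n) as [[k a] b]. simpl.
  destruct (S a <? f (S k)); simpl; [lia|]. destruct (S b <? f' (S k)); simpl; lia.
Qed.

Lemma nu_step n : nu f f' n <= nu f f' (S n) /\ nu f f' (S n) <= S (nu f f' n).
Proof.
  unfold nu. cbn [walk]. destruct (walk f f' n) as [[k a] b]. simpl.
  destruct (S a <? f (S k)); simpl; [lia|]. destruct (S b <? f' (S k)); simpl; lia.
Qed.

Lemma step_cases n :
  (kk f f' (S n) = S (kk f f' n) /\ mu f f' (S n) = S (mu f f' n) /\ nu f f' (S n) = S (nu f f' n)) \/
  (kk f f' (S n) = kk f f' n /\ mu f f' (S n) = S (mu f f' n) /\ nu f f' (S n) = nu f f' n) \/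
  (kk f f' (S n) = kk f f' n /\ mu f f' (S n) = mu f f' n /\ nu f f' (S n) = S (nu f f' n)).
Proof.
  unfold kk, mu, nu. cbn [walk]. destruct (walk f f' n) as [[k a] b]. simpl.
  destruct (S a <? f (S k)); simpl; [auto|]. destruct (S b <? f' (S k)); simpl; auto.
Qed.

Definition meas n := f (S (kk f f' n)) - mu f f' n + (f' (S (kk f f' n)) - nu f f' n).

Lemma progress d : forall n, meas n <= d ->
  (exists m, mu f f' n < mu f f' m) /\ (exists m, nu f f' n < nu f f' m).
Proof.
  unfold meas. induction d as [|d IH]; intros n Hd; pose proof (walk_inv n) as Hi;
  pose proof (walk_inv (S n)) as Hi';
  destruct (step_cases n) as [[H1 [H2 H3]]|[[H1 [H2 H3]]|[H1 [H2 H3]]]].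
  - split; exists (S n); lia.
  - lia.
  - lia.
  - split; exists (S n); lia.
  - split. exists (S n); lia.
    destruct (IH (S n)) as [_ [m Hm]]. rewrite H1. lia. exists m. lia.
  - split. 2: exists (S n); lia.
    destruct (IH (S n)) as [[m Hm] _]. rewrite H1. lia. exists m. lia.
Qed.

Lemma unbounded_gen (g : nat -> nat) : g 0 = 0 ->
  (forall n, exists m, g n < g m) -> forall x, exists n, x <= g n.
Proof.
  intros H0 H x. induction x. exists 0; lia.
  destruct IHx as [n Hn]. destruct (H n) as [m Hm]. exists m; lia.
Qed.

Lemma surj_gen (g : nat -> nat) : g 0 = 0 -> (forall n, g (S n) <= S (g n)) ->
  (forall x, exists n, x <= g n) -> surjective_nat g.
Proof.
  intros H0 Hs Hu x. destruct (Hu x) as [N HN]. clear Hu. revert x HN.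
  induction N; intros x HN. exists 0; lia.
  destruct (Nat.eq_dec x (g (S N))) as [e|e]. exists (S N); auto.
  apply IHN. specialize (Hs N). lia.
Qed.

Lemma mu_props : surjective_nat (mu f f') /\ nondecreasing_nat (mu f f').
Proof.
  split.
  - apply surj_gen. reflexivity. intro n; apply mu_step.
    apply unbounded_gen. reflexivity. intro n. apply (progress (meas n) n). lia.
  - intros m n. apply mono_of_step. intro; apply mu_step.
Qed.

Lemma nu_props : surjective_nat (nu f f') /\ nondecreasing_nat (nu f f').
Proof.
  split.
  - apply surj_gen. reflexivity. intro n; apply nu_step.
    apply unbounded_gen. reflexivity. intro n. apply (progress (meas n) n). lia.
  - intros m n. apply mono_of_step. intro; apply nu_step.
Qed.
End W.

Lemma stf_props {AP : Type} (T : team AP) f t : team_stuttering_fun T f -> T t ->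
  f 0 = 0 /\ forall m, f m < f (S m).
Proof. intros H Ht. destruct (H t Ht) as [H0 [H1 _]]. split; auto. Qed.

Lemma suffix0 {AP : Type} (T : team AP) : team_suffix T 0 = T.
Proof.
  apply team_ext; intro u; split.
  - intros [t [Ht ->]]. exact Ht.
  - intro Hu. exists u. split; auto.
Qed.

Theorem mainTheorem8 (AP : Type) (T S : team AP) :
  stutter_equiv T S <->
  exists mu nu : nat -> nat,
    surjective_nat mu /\ nondecreasing_nat mu /\
    surjective_nat nu /\ nondecreasing_nat nu /\
    forall n, stutter_equiv (team_suffix T (mu n)) (team_suffix S (nu n)).
Proof.
  split.
  - intros [f [f' [HT [HS Heq]]]].
    destruct (classic (exists t, T t)) as [[t Ht]|Hne].
    + assert (HSn : exists s, S s).
      { assert (team_comp T f (trace_comp t f)) by (exists t; auto).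
        rewrite Heq in H. destruct H as [s [Hs _]]. eauto. }
      destruct HSn as [s Hs].
      destruct (stf_props T f t HT Ht) as [Hf0 Hfi].
      destruct (stf_props S f' s HS Hs) as [Hf'0 Hf'i].
      destruct (mu_props f f' Hf0 Hf'0 Hfi Hf'i).
      destruct (nu_props f f' Hf0 Hf'0 Hfi Hf'i).
      exists (mu f f'), (nu f f'). repeat split; auto.
      intro n. destruct (walk_inv f f' Hf0 Hf'0 Hfi Hf'i n) as [Ha Hb].
      destruct (suffix_equiv T f _ _ HT Hfi Ha) as [g [Hg Eg]].
      destruct (suffix_equiv S f' _ _ HS Hf'i Hb) as [g' [Hg' Eg']].
      exists g, g'. split; auto. split; auto. rewrite Eg, Eg', Heq. reflexivity.
    + assert (HSe : forall s, ~ S s).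
      { intros s Hs. assert (team_comp S f' (trace_comp s f')) by (exists s; auto).
        rewrite <- Heq in H. destruct H as [t [Ht _]]. eauto. }
      exists (fun n => n), (fun n => n).
      repeat split; try (intro m; exists m; reflexivity); try (intros m n Hmn; exact Hmn).
      intro n. exists (fun n => n), (fun n => n). split; [|split].
      * intros u [t [Ht _]]. exfalso; eauto.
      * intros u [t [Ht _]]. exfalso; eapply HSe; eauto.
      * apply team_ext; intro u; split.
        -- intros [v [[t [Ht _]] _]]. exfalso; eauto.
        -- intros [v [[t [Ht _]] _]]. exfalso; eapply HSe; eauto.
  - intros [m [n [Hms [Hmm [Hns [Hnm He]]]]]].
    assert (m 0 = 0). { destruct (Hms 0) as [k Hk]. specialize (Hmm 0 k). lia. }
    assert (n 0 = 0). { destruct (Hns 0) as [k Hk]. specialize (Hnm 0 k). lia. }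
    specialize (He 0). rewrite H, H0, !suffix0 in He. exact He.
Qed.
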